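(* Let $n\ge 2$, $t\ge 2$. Every $\mathbb{F}_q$-linear set $L$ of $\Lambda=PG(V,\mathbb{F}_{q^t})=PG(2n-1,q^t)$ of pseudoregulus type is of the form $L_{\rho,f}$; that is, there exist a decomposition $V=U_1\oplus U_2$ with $\dim U_1=\dim U_2=n$, an invertible semilinear map $f:U_1\to U_2$ whose companion automorphism $\sigma$ satisfies $\mathrm{Fix}(\sigma)=\mathbb{F}_q$, and $\rho\in\mathbb{F}_{q^t}^*$, such that $L=\{\langle\mathbf u+\rho f(\mathbf u)\rangle_{q^t}:\mathbf u\in U_1\setminus\{\mathbf 0\}\}$.
   Context: For an $\mathbb{F}_q$-subspace $U$ of $V$, $L_U=\{\langle\mathbf u\rangle_{q^t}:\mathbf u\in U\setminus\{\mathbf 0\}\}$ is the $\mathbb{F}_q$-linear set defined by $U$, of rank $\dim_{\mathbb F_q}U$; the weight of a subspace $PG(W,\mathbb{F}_{q^t})$ in $L_U$ is $\dim_{\mathbb F_q}(W\cap U)$; $L_U$ is scattered if every point has weight 1. A semilinear map $f$ with companion automorphism $\sigma$ is additive with $f(\lambda\mathbf u)=\lambda^\sigma f(\mathbf u)$. Pseudoregulus type: for $t,n\ge 2$, a scattered $\mathbb{F}_q$-linear set $L=L_U$ of $PG(2n-1,q^t)$ of rank $tn$ is of pseudoregulus type if (i) there exist $(q^{nt}-1)/(q^t-1)$ pairwise disjoint lines $s_i$ each of weight $t$ in $L$, and (ii) there exist exactly two $(n-1)$-dimensional subspaces $T_1,T_2$ disjoint from $L$ with $T_j\cap s_i\ne\emptyset$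 for all $i,j$. *)

(* Defs.v *)
From HB Require Import structures.
From mathcomp Require Import all_boot all_order all_algebra.
Set Implicit Arguments. Unset Strict Implicit. Unset Printing Implicit Defensive.
Import GRing.Theory.
Local Open Scope ring_scope.

(* Conventions:
   - K : finFieldType plays the role of F_{q^t};
   - Fq : {pred K} is a subfield of K playing the role of F_q;
   - V = 'rV[K]_m (here m = 2n);
   - F_q-subspaces of V are finite sets U : {set 'rV[K]_m};
   - F_{q^t}-subspaces W of V are represented by matrices (their row spaces,
     mxalgebra), projective dimension = \rank W - 1;
   - a projective point <v>_{q^t} is represented canonically by <<v>>%MS. *)

Section LinearSets.
Variables (K : finFieldType) (Fq : {pred K}) (m : nat).

Definition is_subfield : Prop :=
  [/\ 0 \in Fq, 1 \in Fq,
      (forall x y, x \in Fq -> y \in Fq -> x - y \in Fq),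
      (forall x y, x \in Fq -> y \in Fq -> x * y \in Fq) &
      (forall x, x \in Fq -> x^-1 \in Fq)].

Definition Fsubspace (U : {set 'rV[K]_m}) : Prop :=
  0 \in U /\
  forall (a : K) (u w : 'rV[K]_m), a \in Fq -> u \in U -> w \in U ->
    a *: u + w \in U.

Definition has_Fdim (U : {set 'rV[K]_m}) (d : nat) : Prop :=
  exists vs : 'I_d -> 'rV[K]_m,
    (forall a : 'I_d -> K, (forall i, a i \in Fq) ->
        \sum_i a i *: vs i = 0 -> forall i, a i = 0) /\
    (forall u, u \in U <->
        exists a : 'I_d -> K, (forall i, a i \in Fq) /\ u = \sum_i a i *: vs i).

Definition linset (U : {set 'rV[K]_m}) : {set 'M[K]_m} :=
  [set <<u>>%MS | u in U :\ 0].

(* W \cap U, whose F_q-dimension is the weight of PG(W) in L_U *)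
Definition meetU (U : {set 'rV[K]_m}) (W : 'M[K]_m) : {set 'rV[K]_m} :=
  [set u in U | (u <= W)%MS].

Definition weight_is (U : {set 'rV[K]_m}) (W : 'M[K]_m) (k : nat) : Prop :=
  has_Fdim (meetU U W) k.

Definition scattered (U : {set 'rV[K]_m}) : Prop :=
  forall u, u \in U -> u != 0 -> weight_is U <<u>>%MS 1.

Definition disjoint_from_linset (U : {set 'rV[K]_m}) (W : 'M[K]_m) : Prop :=
  forall u, u \in U -> u != 0 -> ~~ (u <= W)%MS.

End LinearSets.

Definition good_T (K : finFieldType) (Fq : {pred K}) (n : nat)
  (U : {set 'rV[K]_(n + n)}) (S : {set 'M[K]_(n + n)}) (T : 'M[K]_(n + n)) : Prop :=
  [/\ \rank T = n, disjoint_from_linset U T &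
      forall s, s \in S -> (T :&: s != (0 : 'M[K]_(n + n)))%MS].

Definition pseudoregulus_type (K : finFieldType) (Fq : {pred K}) (n t : nat)
  (U : {set 'rV[K]_(n + n)}) : Prop :=
  [/\ (2 <= t)%N && (2 <= n)%N,
      Fsubspace Fq U, has_Fdim Fq U (t * n), scattered Fq U &
      exists S : {set 'M[K]_(n + n)},
        [/\ #|S| = ((#|Fq| ^ (n * t) - 1) %/ (#|Fq| ^ t - 1))%N,
            (* the s_i are lines, distinct as subspaces, of weight t *)
            (forall s, s \in S -> <<s>>%MS = s /\ \rank s = 2%N),
            (forall s, s \in S -> weight_is Fq U s t),
            (forall s s', s \in S -> s' \in S -> s != s' -> (s :&: s' == (0 : 'M[K]_(n + n)))%MS) &
            exists T1 T2 : 'M[K]_(n + n),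
              [/\ good_T Fq U S T1, good_T Fq U S T2, ~~ (T1 == T2)%MS &
                  forall T, good_T Fq U S T -> (T == T1)%MS \/ (T == T2)%MS]]].
Arguments pseudoregulus_type : clear implicits.

(* Main.v *)
Require Import Defs.
From HB Require Import structures.
From mathcomp Require Import all_boot all_order all_algebra zify.
Import GRing.Theory.
Local Open Scope ring_scope.


Lemma card_submx (K : finFieldType) m (A : 'M[K]_m) :
  #|[set v : 'rV[K]_m | (v <= A)%MS]| = (#|K| ^ \rank A)%N.
Proof.
have -> : [set v : 'rV[K]_m | (v <= A)%MS] =
          [set x *m row_base A | x in [set: 'rV[K]_(\rank A)]].
  apply/setP=> v; rewrite inE; apply/idP/imsetP.
    rewrite -(eq_row_base A) => /submxP [D ->]; by exists D; rewrite ?inE.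
  by move=> [x _ ->]; rewrite -(eq_row_base A) submxMl.
rewrite card_in_imset; last by move=> x y _ _; exact: (@row_free_inj _ 1 _ _ _ (row_base_free A)).
by rewrite cardsT card_mx mul1n.
Qed.

Lemma card_Fdim (K : finFieldType) (Fq : {pred K}) m (X : {set 'rV[K]_m}) d :
  is_subfield Fq -> has_Fdim Fq X d -> #|X| = (#|Fq| ^ d)%N.
Proof.
move=> [F0 F1 FB FM FV] [vs [Hind Hgen]].
have -> : X = [set \sum_i (a : {ffun 'I_d -> K}) i *: vs i | a in ffun_on Fq].
  apply/setP=> u; apply/idP/imsetP.
    move=> /Hgen [a [Ha ->]]; exists (finfun a).
      by apply/ffun_onP=> i; rewrite ffunE.
    by apply: eq_bigr=> i _; rewrite ffunE.
  move=> [a /ffun_onP Ha ->]; apply/Hgen; by exists a.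
rewrite card_in_imset ?card_ffun_on ?card_ord //.
move=> a b /ffun_onP Ha /ffun_onP Hb Hab; apply/ffunP=> i.
apply/eqP; rewrite -subr_eq0; apply/eqP.
have := Hind (fun i => a i - b i) (fun i => FB _ _ (Ha i) (Hb i)).
apply.
by rewrite (eq_bigr (fun i => a i *: vs i - b i *: vs i)) ?sumrB ?Hab ?subrr // => j _; rewrite scalerBl.
Qed.

Lemma card_bigcup_disj (T I : finType) (S : {set I}) (A : I -> {set T}) :
  (forall i j, i \in S -> j \in S -> i != j -> [disjoint A i & A j]) ->
  #|\bigcup_(i in S) A i| = (\sum_(i in S) #|A i|)%N.
Proof.
move=> Hd.
rewrite -big_enum -[in RHS]big_enum.
suff: forall r : seq I, uniq r -> all (mem S) r ->
  #|\big[@setU T/set0]_(i <- r) A i| = (\sum_(i <- r) #|A i|)%N.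
  apply; first by rewrite enum_uniq.
  by apply/allP=> x; rewrite mem_enum.
elim=> [|a r IH] /=; first by rewrite !big_nil cards0.
move=> /andP[anr ur] /andP[aS rS].
rewrite !big_cons -IH //.
move: (leq_card_setU (A a) (\big[@setU T/set0]_(j <- r) A j)) => [_].
suff ->: [disjoint A a & \big[@setU T/set0]_(j <- r) A j] by move/eqP.
rewrite -setI_eq0; apply/eqP/setP=> x; rewrite !inE.
apply/negbTE/negP=> /andP[xa].
elim: r anr rS {IH ur} => [|b r IH]; first by rewrite big_nil inE.
rewrite inE negb_or big_cons inE => /andP[ab anr] /= /andP[bS rS] /orP[xb|].
  have := Hd a b aS bS ab; rewrite -setI_eq0 => /eqP/setP/(_ x).
  by rewrite !inE xa xb.
exact: IH.
Qed.

Lemma cover_of (T I : finType) (S : {set I}) (A : I -> {set T}) (B : {set T}) k :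
  (forall i, i \in S -> A i \subset B) ->
  (forall i j, i \in S -> j \in S -> i != j -> [disjoint A i & A j]) ->
  (forall i, i \in S -> #|A i| = k) -> (#|B| <= #|S| * k)%N ->
  forall x, x \in B -> exists2 i, i \in S & x \in A i.
Proof.
move=> sub dis ck cB x xB.
have e : \bigcup_(i in S) A i = B.
  apply/eqP; rewrite eqEcard; apply/andP; split.
    by apply/bigcupsP.
  rewrite card_bigcup_disj // (eq_bigr (fun=> k)) ?sum_nat_const //.
by move: xB; rewrite -e => /bigcupP[i iS xi]; exists i.
Qed.

Lemma count_le (T I : finType) (S : {set I}) (A : I -> {set T}) (B : {set T}) k :
  (forall i, i \in S -> A i \subset B) ->
  (forall i j, i \in S -> j \in S -> i != j -> [disjoint A i & A j]) ->
  (forall i, i \in S -> #|A i| = k) -> (#|S| * k <= #|B|)%N.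
Proof.
move=> sub dis ck.
rewrite -sum_nat_const -(eq_bigr _ ck) -card_bigcup_disj //.
by apply: subset_leq_card; apply/bigcupsP.
Qed.

Lemma exists_nz (K : finFieldType) m (X : {set 'rV[K]_m}) :
  (1 < #|X|)%N -> exists2 u, u \in X & u != 0.
Proof.
move=> h; case: (boolP [exists u in X, u != 0]).
  by move/existsP=> [u /andP[uX nz]]; exists u.
rewrite negb_exists => /forallP H.
have : X \subset [set 0].
  apply/subsetP=> u uX; move: (H u); rewrite uX /= negbK inE => //.
by move/subset_leq_card; rewrite cards1 leqNgt h.
Qed.

Lemma rank1_mult (K : fieldType) m (A : 'M[K]_m) (y z : 'rV[K]_m) :
  \rank A = 1%N -> (y <= A)%MS -> y != 0 -> (z <= A)%MS -> exists c, z = c *: y.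
Proof.
move=> rA yA ynz zA.
have Ay : (A <= y)%MS.
  by rewrite -(mxrank_leqif_sup yA) rA rank_rV ynz.
by apply/sub_rVP; apply: submx_trans Ay.
Qed.

Lemma arith_contra (a b x : nat) : (2 <= a)%N -> (2 <= b)%N -> (a*b - a + 1 <= x)%N -> (x*(a*b) <= a*b*b)%N -> False.
Proof.
move=> ha hb h1 h2. have : (x <= b)%N.
  rewrite -(@leq_pmul2r (a*b)); last by nia.
  by rewrite [(b * _)%N]mulnC.
nia.
Qed.

Lemma submxB' (K : fieldType) m1 m2 n (A B : 'M[K]_(m1,n)) (C : 'M[K]_(m2,n)) :
  (A <= C)%MS -> (B <= C)%MS -> (A - B <= C)%MS.
Proof. by move=> hA hB; rewrite addmx_sub // eqmx_opp. Qed.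
Arguments submxB' {K m1 m2 n A B C}.

Lemma surj_of (T : finType) (X B : {set T}) (f : T -> T) :
  {in X &, injective f} -> (forall u, u \in X -> f u \in B) -> (#|B| <= #|X|)%N ->
  forall x, x \in B -> exists2 u, u \in X & f u = x.
Proof.
move=> inj fB cB x xB.
have e : f @: X = B.
  apply/eqP; rewrite eqEcard card_in_imset // cB andbT.
  by apply/subsetP=> y /imsetP[u uX ->]; apply: fB.
by move: xB; rewrite -e => /imsetP[u uX ->]; exists u.
Qed.

Section MkRM.
Variables (K : fieldType) (f : K -> K).
Hypotheses (fD : forall x y, f (x+y) = f x + f y) (fM : forall x y, f (x*y) = f x * f y) (f1 : f 1 = 1).
Definition ff := f.
Lemma ffB : forall x y, ff (x - y) = ff x - ff y.
Proof. move=> x y. rewrite /ff. have f0: f 0 = 0.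
  have h := fD 0 0; rewrite addr0 in h; apply: (addrI (f 0)); by rewrite -h addr0.
have fN : forall z, f (- z) = - f z by move=> z; apply: (addrI (f z)); by rewrite -fD !subrr f0.
by rewrite fD fN. Qed.
HB.instance Definition _ := GRing.isZmodMorphism.Build K K ff ffB.
HB.instance Definition _ := GRing.isMonoidMorphism.Build K K ff (conj f1 fM).
Definition mk_rm : {rmorphism K -> K} := ff.
End MkRM.

Set Implicit Arguments. Unset Strict Implicit.



Section Main.
Variables (K : finFieldType) (Fq : {pred K}) (n t : nat).
Hypotheses (HFq : is_subfield Fq) (Hn : (2 <= n)%N) (Ht : (2 <= t)%N)
  (HK : #|K| = (#|Fq| ^ t)%N).
Variable U : {set 'rV[K]_(n + n)}.
Hypotheses (HsubU : Fsubspace Fq U) (HdimU : has_Fdim Fq U (t * n))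
  (Hscat : scattered Fq U).
Variable S : {set 'M[K]_(n + n)}.
Hypotheses (HS : #|S| = ((#|Fq| ^ (n * t) - 1) %/ (#|Fq| ^ t - 1))%N)
  (Hline : forall s, s \in S -> <<s>>%MS = s /\ \rank s = 2%N)
  (Hw : forall s, s \in S -> weight_is Fq U s t)
  (Hdisj : forall s s', s \in S -> s' \in S -> s != s' ->
     (s :&: s' == (0 : 'M[K]_(n + n)))%MS).
Variables T1 T2 : 'M[K]_(n + n).
Hypotheses (G1 : good_T Fq U S T1) (G2 : good_T Fq U S T2) (T12 : ~~ (T1 == T2)%MS).

Local Notation m := (n + n).
Local Notation Q := #|K|.
Local Notation vecs A := [set v : 'rV[K]_m | (v <= A)%MS].

Lemma Q2 : (2 <= Q)%N.
Proof.
have : [set (0 : K); 1] \subset [set: K] by apply: subsetT.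
by move/subset_leq_card; rewrite cards2 cardsT eq_sym oner_neq0.
Qed.

Lemma cardU : #|U| = (Q ^ n)%N.
Proof. by rewrite (@card_Fdim _ _ _ _ _ HFq HdimU) HK expnM. Qed.

Lemma cardsU s : s \in S -> #|meetU U s| = Q.
Proof. by move=> sS; rewrite (@card_Fdim _ _ _ _ _ HFq (Hw sS)) HK. Qed.

Lemma cardS : (#|S| * (Q - 1))%N = (Q ^ n - 1)%N.
Proof.
rewrite HS HK [(n * t)%N]mulnC expnM divnK // !subn1; set a := (#|Fq| ^ t)%N; by rewrite predn_exp; apply: dvdn_mulr.
Qed.

Lemma U0 : 0 \in U. Proof. by case: HsubU. Qed.
Lemma UZD a u w : a \in Fq -> u \in U -> w \in U -> a *: u + w \in U.
Proof. by case: HsubU => _; apply. Qed.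
Lemma Fq1 : 1 \in Fq. Proof. by case: HFq. Qed.
Lemma FqN1 : -1 \in Fq. Proof. by case: HFq => F0 F1 FB _ _; rewrite -sub0r FB. Qed.
Lemma UD u w : u \in U -> w \in U -> u + w \in U.
Proof. by move=> uU wU; rewrite -[u]scale1r UZD // Fq1. Qed.
Lemma UB u w : u \in U -> w \in U -> u - w \in U.
Proof. by move=> uU wU; rewrite addrC -scaleN1r UZD // FqN1. Qed.
Lemma UZ a u : a \in Fq -> u \in U -> a *: u \in U.
Proof. by move=> aF uU; rewrite -[_ *: _]addr0 UZD // U0. Qed.

Lemma rank_sT s T : good_T Fq U S T -> s \in S -> \rank (s :&: T) = 1%N.
Proof.
move=> [rT dT mT] sS.
have nz : (s :&: T)%MS != 0.
  by apply: contraNneq (mT s sS) => h; rewrite capmxC h.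
have pos : (0 < \rank (s :&: T))%N by rewrite lt0n mxrank_eq0.
have [_ rs] := Hline sS.
have le2 : (\rank (s :&: T) <= 2)%N by rewrite -rs mxrankS // capmxSl.
case: (ltngtP (\rank (s :&: T)) 1) => [lt1|gt1|//]; first by move: pos; rewrite lt0n; move: lt1; case: (\rank _).
have e2 : \rank (s :&: T) = 2%N by apply/eqP; rewrite eqn_leq le2.
have sT : (s <= T)%MS.
  have := mxrank_leqif_sup (capmxSl s T); rewrite e2 rs => -[_].
  by move/esym; rewrite eqxx => /(submx_trans)/(_ (capmxSr s T)).
have [u uS unz] : exists2 u, u \in meetU U s & u != 0.
  by apply: exists_nz; rewrite cardsU // Q2.
move: uS; rewrite inE => /andP[uU us].
by have := dT u uU unz; rewrite (submx_trans us sT).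
Qed.


Lemma cardD0 (X : {set 'rV[K]_m}) : 0 \in X -> #|X :\ 0| = (#|X| - 1)%N.
Proof. by move=> X0; rewrite (cardsD1 0 X) X0 /= add1n subn1. Qed.

Lemma disj_vec s s' (A B : {set 'rV[K]_m}) : s \in S -> s' \in S -> s != s' ->
  (forall x, x \in A -> (x <= s)%MS) -> (forall x, x \in B -> (x <= s')%MS) ->
  [disjoint A :\ 0 & B :\ 0].
Proof.
move=> sS s'S ss' hA hB; rewrite -setI_eq0; apply/eqP/setP=> x; rewrite !inE.
apply/negbTE/negP=> /andP[/andP[xnz xA] /andP[_ xB]].
have : (x <= s :&: s')%MS by rewrite sub_capmx hA ?hB.
by move/submx_trans/(_ (proj1 (andP (Hdisj sS s'S ss')))); rewrite submx0 (negbTE xnz).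
Qed.

Lemma coverU u : u \in U -> u != 0 -> exists2 s, s \in S & (u <= s)%MS.
Proof.
move=> uU unz.
have [] // := @cover_of _ _ S (fun s => meetU U s :\ 0) (U :\ 0) (Q - 1) _ _ _ _ u.
- by move=> s sS; apply/subsetP=> x; rewrite !inE => /andP[-> /andP[-> _]].
- move=> s s' sS s'S ss'; apply: (disj_vec sS s'S ss') => x; by rewrite inE => /andP[].
- by move=> s sS; rewrite cardD0 ?cardsU // inE U0 sub0mx.
- by rewrite cardD0 ?U0 // cardU cardS.
- by rewrite !inE unz.
by move=> s sS; rewrite !inE => /andP[_ /andP[_ us]]; exists s.
Qed.

Lemma coverT (T : 'M[K]_m) (v : 'rV[K]_m) : good_T Fq U S T -> (v <= T)%MS -> v != 0 ->
  exists2 s, s \in S & (v <= s :&: T)%MS.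
Proof.
move=> gT vT vnz.
have [] // := @cover_of _ _ S (fun s => vecs (s :&: T) :\ 0) (vecs T :\ 0) (Q - 1) _ _ _ _ v.
- move=> s sS; apply/subsetP=> x; rewrite !inE => /andP[-> /= h].
  exact: submx_trans h (capmxSr _ _).
- move=> s s' sS s'S ss'; apply: (disj_vec sS s'S ss') => x; rewrite inE => h;
  exact: submx_trans h (capmxSl _ _).
- by move=> s sS; rewrite cardD0 ?card_submx ?(rank_sT gT sS) ?expn1 // inE sub0mx.
- by case: gT => rT _ _; rewrite cardD0 ?card_submx ?rT ?cardS // inE sub0mx.
- by rewrite !inE vnz.
by move=> s sS; rewrite !inE => /andP[_ vs]; exists s.
Qed.


Lemma capT12 : (T1 :&: T2)%MS = 0.
Proof.
apply/eqP; rewrite -mxrank_eq0.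
set W := (T1 :&: T2)%MS; set d := \rank W.
case: (posnP d) => // dpos; exfalso.
case: G1 => rT1 dT1 mT1; case: G2 => rT2 dT2 mT2.
have dlt : (d < n)%N.
  rewrite ltn_neqAle -{2}rT1 mxrankS ?capmxSl // andbT.
  apply/negP=> /eqP dn; move/negP: T12; apply.
  have T1W : (T1 <= W)%MS by rewrite -(mxrank_leqif_sup (capmxSl T1 T2)) -/d dn rT1.
  have T1T2 : (T1 <= T2)%MS by apply: submx_trans T1W (capmxSr _ _).
  by rewrite -(mxrank_leqif_eq T1T2) rT1 rT2.
set M := (T1 + T2)%MS.
have rM : (\rank M + d = n + n)%N by rewrite mxrank_sum_cap rT1 rT2.
set S' := [set s in S | (s <= M)%MS].
set UM := [set u in U | (u <= M)%MS].
have c1 : (#|vecs T1 :\: vecs W| <= #|S'| * (Q - 1))%N.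
  have sub : vecs T1 :\: vecs W \subset \bigcup_(s in S') (vecs (s :&: T1) :\ 0).
    apply/subsetP=> v; rewrite !inE => /andP[vW vT].
    have vnz : v != 0 by apply: contraNneq vW => ->; rewrite sub0mx.
    have [s sS vs] := coverT G1 vT vnz.
    have [w] : exists2 w, w \in vecs (s :&: T2) & w != 0.
      by apply: exists_nz; rewrite card_submx (rank_sT G2 sS) expn1 Q2.
    rewrite inE => ws wnz.
    have r0 : \rank (v :&: w)%MS = 0%N.
      apply/eqP; apply: contraNT vW => h.
      have r1 : \rank (v :&: w)%MS = \rank v.
        by apply/eqP; rewrite eqn_leq mxrankS ?capmxSl //= rank_rV vnz /= lt0n h.
      have vvw : (v <= v :&: w)%MS.
        by rewrite -(mxrank_leqif_sup (capmxSl v w)) r1.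
      have vw : (v <= w)%MS by apply: submx_trans vvw (capmxSr _ _).
      rewrite sub_capmx vT /=.
      by apply: submx_trans vw (submx_trans ws (capmxSr _ _)).
    have r2 : \rank (v + w)%MS = 2%N.
      by move: (mxrank_sum_cap v w); rewrite r0 addn0 !rank_rV vnz wnz.
    have [_ rs] := Hline sS.
    have vwsM : ((v + w)%MS <= s :&: M)%MS.
      rewrite sub_capmx !addsmx_sub (submx_trans vs (capmxSl _ _)).
      rewrite (submx_trans ws (capmxSl _ _)) /=.
      rewrite (submx_trans (submx_trans vs (capmxSr _ _)) (addsmxSl _ _)) /=.
      by rewrite (submx_trans (submx_trans ws (capmxSr _ _)) (addsmxSr _ _)).
    have ssM : (s <= s :&: M)%MS.
      rewrite -(mxrank_leqif_sup (capmxSl s M)) rs; apply/eqP.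
      apply/eqP; rewrite eqn_leq -{1}rs mxrankS ?capmxSl //= -r2; exact: mxrankS.
    apply/bigcupP; exists s; first by rewrite inE sS (submx_trans ssM (capmxSr _ _)).
    by rewrite !inE vnz.
  apply: leq_trans (subset_leq_card sub) _.
  rewrite card_bigcup_disj.
    rewrite -sum_nat_const leq_sum // => s; rewrite inE => /andP[sS _].
    by rewrite cardD0 ?card_submx ?(rank_sT G1 sS) ?expn1 // inE sub0mx.
  move=> s s'; rewrite !inE => /andP[sS _] /andP[s'S _] ss'.
  by apply: (disj_vec sS s'S ss') => x; rewrite inE => h; exact: submx_trans h (capmxSl _ _).
have c2 : (#|S'| * (Q - 1) + 1 <= #|UM|)%N.
  have := @count_le _ _ S' (fun s => meetU U s :\ 0) (UM :\ 0) (Q - 1).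
  rewrite cardD0 ?inE ?U0 ?sub0mx //.
  have UMpos : (0 < #|UM|)%N by apply/card_gt0P; exists 0; rewrite inE U0 sub0mx.
  move=> h; rewrite addn1; suff: (#|S'| * (Q - 1) <= #|UM| - 1)%N. by move=> ?; lia.
  apply: h.
  - move=> s; rewrite inE => /andP[sS sM]; apply/subsetP=> x; rewrite !inE.
    by move=> /andP[-> /andP[-> xs]]; rewrite (submx_trans xs sM).
  - move=> s s'; rewrite !inE => /andP[sS _] /andP[s'S _] ss'.
    by apply: (disj_vec sS s'S ss') => x; rewrite inE => /andP[].
  - by move=> s; rewrite inE => /andP[sS _]; rewrite cardD0 ?cardsU // inE U0 sub0mx.
have c3 : (#|UM| * Q ^ n <= Q ^ (n + n - d))%N.
  have sub : [set p.1 + p.2 | p in setX UM (vecs T1)] \subset vecs M.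
    apply/subsetP=> v /imsetP[[a b]]; rewrite !inE /= => /andP[/andP[_ aM] bT] ->.
    by rewrite addmx_sub // (submx_trans bT (addsmxSl _ _)).
  move: (subset_leq_card sub); rewrite card_submx card_in_imset ?cardsX ?card_submx ?rT1.
    by rewrite (_ : \rank M = (n + n - d)%N) //; lia.
  move=> [a b] [a' b']; rewrite !inE /= => /andP[/andP[aU _] bT] /andP[/andP[a'U _] b'T] e.
  have e1 : a - a' = b' - b by apply/eqP; rewrite subr_eq addrC addrA -e addrK.
  have aa : a - a' = 0.
    apply/eqP; apply: contraT => nz; have := dT1 _ (UB aU a'U) nz.
    by rewrite e1 (submxB' b'T bT).
  have ea : a = a' by apply/eqP; rewrite -subr_eq0 aa.
  by move: e; rewrite ea => /addrI ->.
have c4 : #|vecs T1 :\: vecs W| = (Q ^ n - Q ^ d)%N.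
  rewrite cardsD card_submx rT1; congr (_ - _)%N.
  rewrite (setIidPr _) ?card_submx //; apply/subsetP=> v; rewrite !inE => h.
  exact: submx_trans h (capmxSl _ _).
have e1 : (Q ^ n = Q ^ d * Q ^ (n - d))%N by rewrite -expnD (subnKC (ltnW dlt)).
have e2 : (Q ^ (n + n - d) = Q ^ d * Q ^ (n - d) * Q ^ (n - d))%N.
  by rewrite -!expnD (subnKC (ltnW dlt)) (addnBA _ (ltnW dlt)).
have Qpos : (0 < Q)%N by apply: ltnW Q2.
have ha : (2 <= Q ^ d)%N.
  by apply: leq_trans Q2 _; rewrite -[X in (X <= _)%N](expn1 Q) (leq_pexp2l Qpos).
have hb : (2 <= Q ^ (n - d))%N.
  apply: leq_trans Q2 _; rewrite -[X in (X <= _)%N](expn1 Q) (leq_pexp2l Qpos); move: dlt; clear; lia.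
apply: (@arith_contra _ _ #|UM| ha hb).
  rewrite -e1 -c4; apply: leq_trans c2; rewrite leq_add2r; exact: c1.
rewrite -e1; move: c3; rewrite e2 -e1; exact.
Qed.


Lemma rT1 : \rank T1 = n. Proof. by case: G1. Qed.
Lemma rT2 : \rank T2 = n. Proof. by case: G2. Qed.
Lemma dT1 u : u \in U -> u != 0 -> ~~ (u <= T1)%MS. Proof. by case: G1 => _ h _; apply: h. Qed.
Lemma dT2 u : u \in U -> u != 0 -> ~~ (u <= T2)%MS. Proof. by case: G2 => _ h _; apply: h. Qed.

Lemma cap21 : (T2 :&: T1)%MS = 0. Proof. by rewrite capmxC capT12. Qed.

Lemma full12 : (1%:M <= T1 + T2)%MS.
Proof.
rewrite sub1mx /row_full; have := mxrank_sum_cap T1 T2.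
by rewrite capT12 mxrank0 addn0 rT1 rT2 => ->.
Qed.

Lemma vT12 (v : 'rV[K]_m) : (v <= T1 + T2)%MS.
Proof. exact: submx_trans (submx1 v) full12. Qed.

Definition p1 (v : 'rV[K]_m) := v *m proj_mx T1 T2.
Definition p2 (v : 'rV[K]_m) := v *m proj_mx T2 T1.

Lemma p1_sub v : (p1 v <= T1)%MS. Proof. exact: proj_mx_sub. Qed.
Lemma p2_sub v : (p2 v <= T2)%MS. Proof. exact: proj_mx_sub. Qed.
Lemma p1_id x : (x <= T1)%MS -> p1 x = x. Proof. exact: proj_mx_id capT12. Qed.
Lemma p1_0 x : (x <= T2)%MS -> p1 x = 0. Proof. exact: proj_mx_0 capT12. Qed.
Lemma p2_id x : (x <= T2)%MS -> p2 x = x. Proof. exact: proj_mx_id cap21. Qed.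
Lemma p2_0 x : (x <= T1)%MS -> p2 x = 0. Proof. exact: proj_mx_0 cap21. Qed.
Lemma p12 v : p1 v + p2 v = v. Proof. exact: add_proj_mx capT12 (vT12 v). Qed.
Lemma p1D u w : p1 (u + w) = p1 u + p1 w. Proof. exact: mulmxDl. Qed.
Lemma p2D u w : p2 (u + w) = p2 u + p2 w. Proof. exact: mulmxDl. Qed.
Lemma p1B u w : p1 (u - w) = p1 u - p1 w. Proof. exact: mulmxBl. Qed.
Lemma p2B u w : p2 (u - w) = p2 u - p2 w. Proof. exact: mulmxBl. Qed.
Lemma p1Z a u : p1 (a *: u) = a *: p1 u. Proof. by rewrite /p1 /p2 scalemxAl. Qed.
Lemma p2Z a u : p2 (a *: u) = a *: p2 u. Proof. by rewrite /p1 /p2 scalemxAl. Qed.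
Lemma p1_0v : p1 0 = 0. Proof. exact: mul0mx. Qed.
Lemma p2_0v : p2 0 = 0. Proof. exact: mul0mx. Qed.

Lemma p1_injU : {in U &, injective p1}.
Proof.
move=> u w uU wU e; apply/eqP; rewrite -subr_eq0; apply: contraT => nz.
have d0 : p1 (u - w) = 0 by rewrite p1B e subrr.
have := dT2 (UB uU wU) nz; rewrite -(p12 (u - w)) d0 add0r p2_sub.
by [].
Qed.

Lemma p2_injU : {in U &, injective p2}.
Proof.
move=> u w uU wU e; apply/eqP; rewrite -subr_eq0; apply: contraT => nz.
have d0 : p2 (u - w) = 0 by rewrite p2B e subrr.
have := dT1 (UB uU wU) nz; rewrite -(p12 (u - w)) d0 addr0 p1_sub.
by [].
Qed.

Lemma p1_surj x : (x <= T1)%MS -> exists2 u, u \in U & p1 u = x.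
Proof.
move=> xT; apply: (@surj_of _ U (vecs T1)).
- exact: p1_injU.
- by move=> u _; rewrite inE p1_sub.
- by rewrite card_submx rT1 cardU.
- by rewrite inE.
Qed.

Lemma p2_surj x : (x <= T2)%MS -> exists2 u, u \in U & p2 u = x.
Proof.
move=> xT; apply: (@surj_of _ U (vecs T2)).
- exact: p2_injU.
- by move=> u _; rewrite inE p2_sub.
- by rewrite card_submx rT2 cardU.
- by rewrite inE.
Qed.

Definition g (x : 'rV[K]_m) := p2 (odflt 0 [pick u in U | p1 u == x]).

Lemma gU u : u \in U -> g (p1 u) = p2 u.
Proof.
move=> uU; rewrite /g; case: pickP => [w /andP[wU /eqP e]|h] /=.
  by rewrite (p1_injU wU uU e).
by move: (h u); rewrite uU eqxx.
Qed.

Lemma g_sub x : (g x <= T2)%MS. Proof. exact: p2_sub. Qed.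

Lemma U_decomp u : u \in U -> u = p1 u + g (p1 u).
Proof. by move=> uU; rewrite gU // p12. Qed.

Lemma gP x : (x <= T1)%MS -> x + g x \in U.
Proof. by move=> xT; have [u uU <-] := p1_surj xT; rewrite -U_decomp. Qed.

Lemma p1g x : (x <= T1)%MS -> p1 (x + g x) = x.
Proof. by move=> xT; rewrite p1D p1_id // p1_0 ?g_sub // addr0. Qed.

Lemma p2g x : (x <= T1)%MS -> p2 (x + g x) = g x.
Proof. by move=> xT; rewrite p2D p2_0 // p2_id ?g_sub // add0r. Qed.

Lemma gD x y : (x <= T1)%MS -> (y <= T1)%MS -> g (x + y) = g x + g y.
Proof.
move=> xT yT; have := gU (UD (gP xT) (gP yT)).
by rewrite p1D p2D !p1g ?p2g.
Qed.

Lemma gZ a x : a \in Fq -> (x <= T1)%MS -> g (a *: x) = a *: g x.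
Proof.
move=> aF xT; have := gU (UZ aF (gP xT)).
by rewrite p1Z p2Z p1g ?p2g.
Qed.

Lemma g0 : g 0 = 0.
Proof. by have := gU U0; rewrite p1_0v p2_0v. Qed.

Lemma g_inj x y : (x <= T1)%MS -> (y <= T1)%MS -> g x = g y -> x = y.
Proof.
move=> xT yT e.
have e2 : p2 (x + g x) = p2 (y + g y) by rewrite !p2g.
have := p2_injU (gP xT) (gP yT) e2.
by move/(congr1 p1); rewrite !p1g.
Qed.

Lemma g_nz x : (x <= T1)%MS -> x != 0 -> g x != 0.
Proof.
move=> xT; apply: contraNneq => h; apply/eqP.
by apply: g_inj; rewrite ?sub0mx ?g0.
Qed.

Lemma g_surj v : (v <= T2)%MS -> exists2 x, (x <= T1)%MS & g x = v.
Proof. by move=> vT; have [u uU <-] := p2_surj vT; exists (p1 u); rewrite ?p1_sub ?gU. Qed.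

Lemma s_decomp s : s \in S -> (s <= (s :&: T1) + (s :&: T2))%MS.
Proof.
move=> sS; have [_ rs] := Hline sS.
have r0 : \rank ((s :&: T1) :&: (s :&: T2))%MS = 0%N.
  apply/eqP; rewrite -leqn0 -(mxrank0 K m m) -capT12; apply: mxrankS.
  by apply: capmxS; apply: capmxSr.
have r2 : \rank ((s :&: T1) + (s :&: T2))%MS = 2%N.
  by move: (mxrank_sum_cap (s :&: T1)%MS (s :&: T2)%MS); rewrite r0 addn0 (rank_sT G1 sS) (rank_sT G2 sS).
have sub : ((s :&: T1) + (s :&: T2) <= s)%MS by rewrite addsmx_sub !capmxSl.
by rewrite -(mxrank_leqif_sup sub) r2 rs.
Qed.

Lemma line_proj s u : s \in S -> (u <= s)%MS ->
  (p1 u <= s :&: T1)%MS /\ (p2 u <= s :&: T2)%MS.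
Proof.
move=> sS us; move: (submx_trans us (s_decomp sS)) => /sub_addsmxP[[D1 D2] /= ->].
have h1 : (D1 *m (s :&: T1) <= T1)%MS := submx_trans (submxMl _ _) (capmxSr _ _).
have h2 : (D2 *m (s :&: T2) <= T2)%MS := submx_trans (submxMl _ _) (capmxSr _ _).
rewrite p1D p2D p1_id // p1_0 // p2_0 // p2_id // addr0 add0r.
by split; apply: submxMl.
Qed.

Lemma line_surj s y : s \in S -> (y <= s :&: T1)%MS ->
  exists2 w, w \in meetU U s & p1 w = y.
Proof.
move=> sS ys; apply: (@surj_of _ (meetU U s) (vecs (s :&: T1))).
- by move=> u w; rewrite !inE => /andP[uU _] /andP[wU _]; apply: p1_injU.
- by move=> u; rewrite !inE => /andP[_ us]; case: (line_proj sS us).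
- by rewrite card_submx (rank_sT G1 sS) expn1 cardsU.
- by rewrite inE.
Qed.

Lemma line_of x : (x <= T1)%MS -> x != 0 ->
  exists2 s, s \in S & (x <= s :&: T1)%MS /\ (g x <= s :&: T2)%MS.
Proof.
move=> xT xnz.
have unz : x + g x != 0.
  by apply: contraNneq xnz => h; rewrite -(p1g xT) h p1_0v.
have [s sS us] := coverU (gP xT) unz.
exists s => //; have := line_proj sS us; by rewrite p1g ?p2g.
Qed.

Lemma line_mult x l : (x <= T1)%MS -> x != 0 -> exists c, g (l *: x) = c *: g x.
Proof.
move=> xT xnz; have [s sS [xs gs]] := line_of xT xnz.
have [w] := line_surj sS (scalemx_sub l xs).
rewrite inE => /andP[wU ws] e.
have := gU wU; rewrite e => ->.
apply: (@rank1_mult _ _ _ _ _ (rank_sT G2 sS) gs (g_nz xT xnz)).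
by case: (line_proj sS ws).
Qed.

Lemma point_inj x x' c : (x <= T1)%MS -> x != 0 -> (x' <= T1)%MS -> x' != 0 ->
  g x' = c *: g x -> (x' <= x)%MS.
Proof.
move=> xT xnz x'T x'nz e.
have [s sS [xs gs]] := line_of xT xnz.
have [s' s'S [x's gs']] := line_of x'T x'nz.
case: (eqVneq s s') => [ss'|ss'].
  subst s'; have [d ->] := @rank1_mult _ _ _ _ _ (rank_sT G1 sS) xs xnz x's.
  by apply: scalemx_sub.
exfalso; move/negP: (g_nz x'T x'nz); apply.
have h : (g x' <= s :&: s')%MS.
  rewrite sub_capmx (submx_trans gs' (capmxSl _ _)) andbT e.
  by apply: scalemx_sub; apply: submx_trans gs (capmxSl _ _).
by rewrite -submx0 (submx_trans h (proj1 (andP (Hdisj sS s'S ss')))).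
Qed.


Lemma same_c_indep x y l c c' : (x <= T1)%MS -> x != 0 -> (y <= T1)%MS -> y != 0 ->
  ~~ (y <= x)%MS -> g (l *: x) = c *: g x -> g (l *: y) = c' *: g y -> c = c'.
Proof.
move=> xT xnz yT ynz yx ex ey.
have xyT : ((x + y)%R <= T1)%MS by rewrite addmx_sub.
have xynz : x + y != 0.
  apply: contraNneq yx => e.
  have -> : y = - x by apply/eqP; rewrite -addr_eq0 addrC e.
  by rewrite eqmx_opp.
have [e0 he] := line_mult l xyT xynz.
have H : c *: g x + c' *: g y = e0 *: g x + e0 *: g y.
  rewrite -ex -ey -gD ?scalemx_sub // -scalerDr he gD //.
  by rewrite scalerDr.
have E : (c' - e0) *: g y = (e0 - c) *: g x.
  rewrite !scalerBl; apply/eqP; rewrite subr_eq addrAC -H addrAC subrr add0r.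
  by [].
have gxnz := g_nz xT xnz.
case: (eqVneq (c' - e0) 0) => [h|h].
  move: E; rewrite h scale0r => /esym/eqP; rewrite scaler_eq0 (negbTE gxnz) orbF.
  by rewrite subr_eq0 => /eqP <-; apply/esym/eqP; rewrite -subr_eq0 h.
exfalso; move/negP: yx; apply.
apply: (@point_inj x y ((c' - e0)^-1 * (e0 - c))) => //.
by rewrite -scalerA -E scalerA mulVf // scale1r.
Qed.

Lemma same_c x y l c c' : (x <= T1)%MS -> x != 0 -> (y <= T1)%MS -> y != 0 ->
  g (l *: x) = c *: g x -> g (l *: y) = c' *: g y -> c = c'.
Proof.
move=> xT xnz yT ynz ex ey.
case: (boolP (y <= x)%MS) => yx; last exact: (same_c_indep xT xnz yT ynz yx ex ey).
have T1x : ~~ (T1 <= x)%MS.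
  apply/negP=> h; have := mxrankS h; rewrite rT1 rank_rV.
  by case: (x != 0) => /= hn; move: Hn hn; clear; lia.
have [i hi] := row_subPn T1x.
set z := row i T1 in hi.
have zT : (z <= T1)%MS by apply: row_sub.
have znz : z != 0 by apply: contraNneq hi => ->; rewrite sub0mx.
have [cz ez] := line_mult l zT znz.
have zy : ~~ (z <= y)%MS by apply: contra hi => h; apply: submx_trans h yx.
rewrite (same_c_indep xT xnz zT znz hi ex ez).
by rewrite (same_c_indep yT ynz zT znz zy ey ez).
Qed.

Section Sig.
Variable x0 : 'rV[K]_m.
Hypotheses (x0T : (x0 <= T1)%MS) (x0nz : x0 != 0).

Definition sig (l : K) : K := odflt 0 [pick c | g (l *: x0) == c *: g x0].

Lemma sigP l : g (l *: x0) = sig l *: g x0.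
Proof.
rewrite /sig; case: pickP => [c /eqP //|h].
have [c ec] := line_mult l x0T x0nz.
by move: (h c); rewrite ec eqxx.
Qed.

Lemma sig_all x l : (x <= T1)%MS -> g (l *: x) = sig l *: g x.
Proof.
move=> xT; case: (eqVneq x 0) => [->|xnz]; first by rewrite scaler0 g0 scaler0.
have [c ec] := line_mult l xT xnz.
by rewrite ec (same_c xT xnz x0T x0nz ec (sigP l)).
Qed.

Lemma gx0nz : g x0 != 0. Proof. exact: g_nz. Qed.

Lemma scal_inj (a b : K) : a *: g x0 = b *: g x0 -> a = b.
Proof.
move/eqP; rewrite -subr_eq0 -scalerBl scaler_eq0 (negbTE gx0nz) orbF subr_eq0.
by move/eqP.
Qed.

Lemma sigD a b : sig (a + b) = sig a + sig b.
Proof.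
apply: scal_inj; rewrite -sigP scalerDl gD ?scalemx_sub // scalerDl.
by rewrite !sigP.
Qed.

Lemma sigM a b : sig (a * b) = sig a * sig b.
Proof.
apply: scal_inj; rewrite -sigP -scalerA sig_all ?scalemx_sub //.
by rewrite sigP scalerA.
Qed.

Lemma sig1 : sig 1 = 1.
Proof. by apply: scal_inj; rewrite -sigP !scale1r. Qed.

Lemma sig_fix x : sig x = x <-> x \in Fq.
Proof.
split => [hx|xF]; last by apply: scal_inj; rewrite -sigP gZ.
set u := x0 + g x0.
have uU : u \in U by apply: gP.
have unz : u != 0 by apply: contraNneq x0nz => h; rewrite -(p1g x0T) -/u h p1_0v.
have xuU : x *: u \in U.
  by rewrite /u scalerDr -{2}hx -sig_all //; apply: gP; apply: scalemx_sub.
have [vs [_ Hgen]] := Hscat uU unz.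
have : u \in meetU U <<u>>%MS by rewrite inE uU genmxE submx_refl.
move/Hgen => [a [aF ea]].
have : x *: u \in meetU U <<u>>%MS by rewrite inE xuU /= genmxE; apply: scalemx_sub.
move/Hgen => [b [bF eb]].
rewrite big_ord1 in ea; rewrite big_ord1 in eb.
have a0 : a ord0 != 0 by apply: contraNneq unz => h; rewrite ea h scale0r.
have e : x * a ord0 = b ord0.
  have vnz : vs ord0 != 0 by apply: contraNneq unz => h; rewrite ea h scaler0.
  move/eqP: eb; rewrite ea scalerA -subr_eq0 -scalerBl scaler_eq0 (negbTE vnz) orbF subr_eq0.
  by move/eqP.
have -> : x = b ord0 * (a ord0)^-1 by rewrite -e mulfK.
case: HFq => _ _ _ FM FV; apply: FM => //; exact: FV.
Qed.

End Sig.


Lemma main_concl :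
  exists (U1 U2 : 'M[K]_(n + n)) (sigma : {rmorphism K -> K})
         (f : 'rV[K]_(n + n) -> 'rV[K]_(n + n)) (rho : K),
    [/\ \rank U1 = n, \rank U2 = n, (U1 + U2 == 1%:M)%MS
      & (U1 :&: U2 == (0 : 'M[K]_(n + n)))%MS] /\
    [/\ (forall u, (u <= U1)%MS -> (f u <= U2)%MS),
        (forall u w, (u <= U1)%MS -> (w <= U1)%MS -> f (u + w) = f u + f w)
      & (forall (l : K) u, (u <= U1)%MS -> f (l *: u) = sigma l *: f u)] /\
    (forall u w, (u <= U1)%MS -> (w <= U1)%MS -> f u = f w -> u = w) /\
    (forall v, (v <= U2)%MS -> exists2 u, (u <= U1)%MS & f u = v) /\
    (forall x : K, sigma x = x <-> x \in Fq) /\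
    rho != 0 /\
    linset U = [set <<u + rho *: f u>>%MS | u in [set u | (u <= U1)%MS && (u != 0)]].
Proof.
have [x0 x0in x0nz] : exists2 x0, x0 \in vecs T1 & x0 != 0.
  apply: exists_nz; rewrite card_submx rT1.
  apply: leq_trans Q2 _; rewrite -{1}(expn1 Q) (leq_pexp2l (ltnW Q2)).
  done.
  by apply: leq_trans Hn.
rewrite inE in x0in.
exists T1, T2, (@mk_rm _ _ (sigD x0in x0nz) (sigM x0in x0nz) (sig1 x0in x0nz)), g, 1.
split; first by split; [exact: rT1 | exact: rT2 | rewrite submx1 full12 | rewrite capT12 !sub0mx].
split; first by split; [move=> u _; exact: g_sub | exact: gD | move=> l u uT; exact: sig_all].
split; first exact: g_inj.
split; first exact: g_surj.
split; first exact: sig_fix.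
split; first exact: oner_neq0.
apply/setP=> P; apply/imsetP/imsetP.
  move=> [u]; rewrite !inE => /andP[unz uU] ->.
  exists (p1 u); last by rewrite scale1r -U_decomp.
  rewrite inE p1_sub /=; apply: contraNneq unz => h.
  by rewrite (U_decomp uU) h g0 addr0.
move=> [x]; rewrite inE => /andP[xT xnz] ->.
exists (x + 1 *: g x) => //.
rewrite scale1r !inE gP // andbT; apply: contraNneq xnz => h.
by rewrite -(p1g xT) h p1_0v.
Qed.

End Main.

Unset Implicit Arguments. Set Strict Implicit.

Theorem theorem3p12 (K : finFieldType) (Fq : {pred K}) (n t : nat)
  (HFq : is_subfield Fq) (Hn : (2 <= n)%N) (Ht : (2 <= t)%N)
  (HK : #|K| = (#|Fq| ^ t)%N)
  (U : {set 'rV[K]_(n + n)}) (HU : pseudoregulus_type K Fq n t U) :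
  exists (U1 U2 : 'M[K]_(n + n)) (sigma : {rmorphism K -> K})
         (f : 'rV[K]_(n + n) -> 'rV[K]_(n + n)) (rho : K),
    (* V = U1 (+) U2, dim U1 = dim U2 = n *)
    [/\ \rank U1 = n, \rank U2 = n, (U1 + U2 == 1%:M)%MS
      & (U1 :&: U2 == (0 : 'M[K]_(n + n)))%MS] /\
    (* f : U1 -> U2 is semilinear with companion automorphism sigma *)
    [/\ (forall u, (u <= U1)%MS -> (f u <= U2)%MS),
        (forall u w, (u <= U1)%MS -> (w <= U1)%MS -> f (u + w) = f u + f w)
      & (forall (l : K) u, (u <= U1)%MS -> f (l *: u) = sigma l *: f u)] /\
    (* f is invertible (a bijection U1 -> U2) *)
    (forall u w, (u <= U1)%MS -> (w <= U1)%MS -> f u = f w -> u = w) /\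
    (forall v, (v <= U2)%MS -> exists2 u, (u <= U1)%MS & f u = v) /\
    (* Fix(sigma) = F_q *)
    (forall x : K, sigma x = x <-> x \in Fq) /\
    rho != 0 /\
    linset U = [set <<u + rho *: f u>>%MS | u in [set u | (u <= U1)%MS && (u != 0)]].
Proof.
case: HU => _ Hsub Hdim Hsc [S [HS Hline Hw Hdisj [T1 [T2 [G1 G2 T12 _]]]]].
eapply main_concl with (T1 := T1) (T2 := T2); eassumption.
Qed.
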